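(* Let $P$ be a finite poset. Consider the following (nondeterministic) algorithm: set $P_0:=P$; at step $m$, if $P_m$ contains an $N$, choose some $N$ in $P_m$ and let $P_{m+1}$ be obtained from $P_m$ by adding one dummy vertex on the diagonal edge of that $N$; stop when $P_m$ is $N$-free. Then, whatever choices are made, the algorithm stops, and it stops on $S_N(S_N(P))$, which is the smallest $N$-free poset obtained as a barycentric subdivision of $\mathrm{Diag}(P)$. Hence the resulting poset and the number of steps do not depend on the choices of diagonal edges made at each step.
   Context: For a poset $P$, a covering pair is a pair $(x,y)$ with $x<y$ and no $z$ with $x<z<y$; we write $x\prec y$. $\mathrm{Diag}(P)$ is the directed graph on $P$ whose edges are the covering pairs. $\mathrm{Inc}(P)$ is the set of pairs of incomparable elements. Four elements $a,b,c,d$ of $P$ form an $N$ in $P$ if $b\prec c$, $a\prec c$, $b\prec d$ and $(a,d)\in\mathrm{Inc}(P)$; the pair $(b,c)$ is then the diagonal edge of this $N$. $P$ is $N$-free if it contains no $N$. $N_{diag}(P)$ denotes the set of diagonal edges of all $N$'s in $P$. Adding a dummy vertex $u$ on a covering pair $(x,y)$ means adding a new element $u$ with $x\prec u\prec y$ and taking the induced (transitive) order. A barycentric subdivision of $\mathrm{Diag}(P)$ consists of adding finitely many (possibly zero) new vertices on each edge of $\mathrm{Diag}(P)$. $S_N(P)$ is the poset obtained from $P$ by adding one dummy vertex on each edge of $N_{diag}(P)$. *)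

(* Defs.v *)
From mathcomp Require Import all_boot.
Set Implicit Arguments. Unset Strict Implicit. Unset Printing Implicit Defensive.

(* A finite "poset candidate": a finite carrier with a boolean relation le
   (meant as the non-strict order x <= y). *)
Record fposet := FPoset { elt :> finType; ple : rel elt }.
Arguments ple : clear implicits.

Definition is_poset (P : fposet) : Prop :=
  [/\ reflexive (ple P), antisymmetric (ple P) & transitive (ple P)].

Section Notions.
Variable P : fposet.
Local Notation le := (ple P).

Definition plt (x y : P) : bool := (x != y) && le x y.

Definition covers (x y : P) : bool :=
  plt x y && [forall z : P, ~~ (plt x z && plt z y)].

Definition incomp (a d : P) : bool := ~~ le a d && ~~ le d a.

Definition isN (a b c d : P) : bool :=
  [&& covers b c, covers a c, covers b d & incomp a d].

Definition Ndiag (b c : P) : bool := [exists a : P, exists d : P, isN a b c d].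

Definition Nfree : bool := [forall a : P, forall b : P, forall c : P, forall d : P,
  ~~ isN a b c d].

(* Barycentric subdivision of Diag(P): k x y new vertices on each edge (x,y);
   k must vanish on non-edges (see [valid_subdiv]). The new vertices on the
   edge (x,y) are (x,y,i), i < k x y, in the order x ≺ (x,y,0) ≺ ... ≺ y. *)
Variable k : P -> P -> nat.
Definition kmax : nat := \max_(p : P * P) k p.1 p.2.
Definition sd_raw : finType := (P + (P * P * 'I_(kmax.+1)))%type.
Definition sd_ok (u : sd_raw) : bool :=
  match u with
  | inl _ => true
  | inr (x, y, i) => covers x y && (i < k x y)
  end.
Definition sd_carrier : finType := {u : sd_raw | sd_ok u}.
(* the order generated by the subdivided diagram (reachability) *)
Definition sd_le_raw (u v : sd_raw) : bool :=
  match u, v with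
  | inl a, inl b => le a b
  | inl a, inr (x, _, _) => le a x
  | inr (_, y, _), inl b => le y b
  | inr (x, y, i), inr (x', y', j) => (((x, y) == (x', y')) && (i <= j)) || le y x'
  end.
Definition subdiv : fposet :=
  @FPoset sd_carrier (fun u v => sd_le_raw (val u) (val v)).
End Notions.

Definition valid_subdiv (P : fposet) (k : P -> P -> nat) : Prop :=
  forall x y : P, 0 < k x y -> covers x y.

Definition add_dummy (P : fposet) (x y : P) : fposet :=
  subdiv (fun a b : P => nat_of_bool ((a, b) == (x, y))).

Definition S_N (P : fposet) : fposet :=
  subdiv (fun b c : P => nat_of_bool (Ndiag b c)).

Definition iso (P Q : fposet) : Prop :=
  exists f : P -> Q, bijective f /\ forall x y : P, ple Q (f x) (f y) = ple P x y.

Definition step (P Q : fposet) : Prop :=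
  exists (b c : P), Ndiag b c /\ iso Q (add_dummy b c).

(* a run P = P_0, P_1, ..., P_n ; s = [:: P_1; ...; P_n] *)
Fixpoint run (P : fposet) (s : seq fposet) : Prop :=
  match s with
  | [::] => True
  | Q :: s' => step P Q /\ run Q s'
  end.

(* Main.v *)
Require Import Defs.
From mathcomp Require Import all_boot.
Set Implicit Arguments. Unset Strict Implicit. Unset Printing Implicit Defensive.

Section Basic.
Variable P : fposet.
Hypothesis HP : is_poset P.
Local Notation le := (ple P).

Lemma le_refl (x : P) : le x x.
Proof. by case: HP => r _ _; apply: r. Qed.
Lemma le_trans (x y z : P) : le x y -> le y z -> le x z.
Proof. by case: HP => _ _ t; move=> h1 h2; apply: (t y). Qed.
Lemma le_anti (x y : P) : le x y -> le y x -> x = y.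
Proof. by case: HP => _ a _ h1 h2; apply: a; rewrite h1 h2. Qed.

Lemma pltE (x y : P) : plt x y = (x != y) && le x y.
Proof. by []. Qed.
Lemma pltW (x y : P) : plt x y -> le x y.
Proof. by case/andP. Qed.
Lemma plt_neq (x y : P) : plt x y -> x != y.
Proof. by case/andP. Qed.
Lemma plt_nle (x y : P) : plt x y -> ~~ le y x.
Proof. case/andP=> ne lxy; apply/negP=> lyx; by rewrite (le_anti lxy lyx) eqxx in ne. Qed.
Lemma plt_trans (x y z : P) : plt x y -> plt y z -> plt x z.
Proof.
move=> h1 h2; rewrite /plt (le_trans (pltW h1) (pltW h2)) andbT.
apply/eqP=> exz; subst z; by move: (plt_nle h1); rewrite (pltW h2).
Qed.
Lemma plt_le_trans (x y z : P) : plt x y -> le y z -> plt x z.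
Proof.
move=> h1 h2; rewrite /plt (le_trans (pltW h1) h2) andbT.
apply/eqP=> exz; subst z; by move: (plt_nle h1); rewrite h2.
Qed.
Lemma le_plt_trans (x y z : P) : le x y -> plt y z -> plt x z.
Proof.
move=> h1 h2; rewrite /plt (le_trans h1 (pltW h2)) andbT.
apply/eqP=> exz; subst z; by move: (plt_nle h2); rewrite h1.
Qed.
Lemma pltI (x y : P) : x != y -> le x y -> plt x y.
Proof. by move=> h1 h2; rewrite /plt h1 h2. Qed.

Lemma covers_plt (x y : P) : covers x y -> plt x y.
Proof. by case/andP. Qed.
Lemma covers_le (x y : P) : covers x y -> le x y.
Proof. by move/covers_plt/pltW. Qed.
Lemma covers_neq (x y : P) : covers x y -> x != y.
Proof. by move/covers_plt/plt_neq. Qed.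
Lemma covers_nbetween (x y z : P) : covers x y -> plt x z -> plt z y -> False.
Proof. by case/andP=> _ /forallP /(_ z); rewrite negb_and => /orP [] /negP. Qed.
Lemma covers_between (x y z : P) : covers x y -> le x z -> le z y -> z = x \/ z = y.
Proof.
move=> c h1 h2; case: (eqVneq z x) => [->|nx]; first by left.
case: (eqVneq z y) => [->|ny]; first by right.
exfalso; apply: (covers_nbetween c (z:=z)); apply: pltI => //; by rewrite eq_sym.
Qed.
Lemma coversI (x y : P) : plt x y -> (forall z, plt x z -> plt z y -> False) -> covers x y.
Proof.
move=> h1 h2; rewrite /covers h1 /=; apply/forallP=> z; apply/negP=> /andP [a b].
exact: (h2 z).
Qed.

Lemma chain_up_aux n (x y : P) : #|[set z | plt x z && plt z y]| <= n -> plt x y ->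
  exists c, covers x c /\ le c y.
Proof.
elim: n x y => [|n IH] x y hn hxy.
  exists y; split; last exact: le_refl.
  apply: coversI => // z h1 h2; move: hn; rewrite leqn0 => /eqP/cards0_eq/setP/(_ z).
  by rewrite inE h1 h2 inE.
case: (boolP [exists z, plt x z && plt z y]) => [/existsP [z /andP [h1 h2]]|hno].
  have sub : [set w | plt x w && plt w z] \proper [set w | plt x w && plt w y].
    apply/properP; split.
      apply/subsetP=> w; rewrite !inE => /andP [a b]; by rewrite a (plt_trans b h2).
    exists z; rewrite !inE ?h1 ?h2 //=; rewrite /plt eqxx /=; by case: (plt x z).
  have := proper_card sub => lt.
  have hz : #|[set w | plt x w && plt w z]| <= n by rewrite -ltnS; exact: (leq_trans lt hn).
  have [c [cc lc]] := IH x z hz h1.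
  exists c; split => //; exact: le_trans lc (pltW h2).
exists y; split; last exact: le_refl.
apply: coversI => // z h1 h2; move/existsP: hno; apply; by exists z; rewrite h1 h2.
Qed.
Lemma chain_up (x y : P) : plt x y -> exists c, covers x c /\ le c y.
Proof. exact: chain_up_aux (leqnn _). Qed.

Lemma chain_down_aux n (x y : P) : #|[set z | plt x z && plt z y]| <= n -> plt x y ->
  exists c, le x c /\ covers c y.
Proof.
elim: n x y => [|n IH] x y hn hxy.
  exists x; split; first exact: le_refl.
  apply: coversI => // z h1 h2; move: hn; rewrite leqn0 => /eqP/cards0_eq/setP/(_ z).
  by rewrite inE h1 h2 inE.
case: (boolP [exists z, plt x z && plt z y]) => [/existsP [z /andP [h1 h2]]|hno].
  have sub : [set w | plt z w && plt w y] \proper [set w | plt x w && plt w y].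
    apply/properP; split.
      apply/subsetP=> w; rewrite !inE => /andP [a b]; by rewrite b (plt_trans h1 a).
    exists z; rewrite !inE ?h1 ?h2 //= /plt eqxx /=; by case: (plt z y).
  have := proper_card sub => lt.
  have hz : #|[set w | plt z w && plt w y]| <= n by rewrite -ltnS; exact: (leq_trans lt hn).
  have [c [lc cc]] := IH z y hz h2.
  exists c; split => //; exact: le_trans (pltW h1) lc.
exists x; split; first exact: le_refl.
apply: coversI => // z h1 h2; move/existsP: hno; apply; by exists z; rewrite h1 h2.
Qed.
Lemma chain_down (x y : P) : plt x y -> exists c, le x c /\ covers c y.
Proof. exact: chain_down_aux (leqnn _). Qed.
End Basic.

Definition Dg (P : fposet) (S : P -> P -> bool) (x y : P) : bool :=
  [&& covers x y, ~~ S x y & [exists a : P, exists d : P,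
     [&& covers a y, a != x, covers x d, d != y & [|| S a y, S x d | ~~ ple P a d]]]].
Definition D1 (P : fposet) := Dg (fun _ _ : P => false).
Definition D2 (P : fposet) := Dg (@D1 P).
Definition TT (P : fposet) (x y : P) := D1 x y || D2 x y.

Section Comb.
Variable P : fposet.
Hypothesis HP : is_poset P.
Local Notation le := (ple P).

Lemma DgI (S : P -> P -> bool) x y a d : covers x y -> ~~ S x y -> covers a y -> a != x ->
  covers x d -> d != y -> [|| S a y, S x d | ~~ le a d] -> Dg S x y.
Proof.
move=> *; rewrite /Dg; apply/and3P; split => //; apply/existsP; exists a; apply/existsP; exists d.
by apply/and5P; split.
Qed.

Lemma nD1 (x y a d : P) : ~~ D1 x y -> covers x y -> covers a y -> a != x -> covers x d -> d != y -> le a d.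
Proof.
move=> n *; apply/negPn/negP => h; move/negP: n; apply.
by apply: (DgI (a:=a) (d:=d)) => //; rewrite h.
Qed.

Lemma Dg_mono (S S' : P -> P -> bool) x y : (forall a b, S a b -> S' a b) -> Dg S x y -> ~~ S' x y ->
  Dg S' x y.
Proof.
move=> H /and3P [c _ /existsP [a /existsP [d /and5P [h1 h2 h3 h4 h5]]]] nS.
apply: (DgI (a:=a) (d:=d)) => //.
case/orP: h5 => [/H ->//|/orP [/H ->|->]]; by rewrite ?orbT.
Qed.

Lemma Dg_covers (S : P -> P -> bool) x y : Dg S x y -> covers x y.
Proof. by case/and3P. Qed.
Lemma Dg_nS (S : P -> P -> bool) x y : Dg S x y -> ~~ S x y.
Proof. by case/and3P. Qed.

Lemma Dg_ext (S S' : P -> P -> bool) x y : (forall a b, S a b = S' a b) -> Dg S x y = Dg S' x y.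
Proof.
move=> H; apply/idP/idP => h.
  apply: (Dg_mono (S:=S)) => //; [by move=> a b; rewrite H| by rewrite -H (Dg_nS h)].
apply: (Dg_mono (S:=S')) => //; [by move=> a b; rewrite H| by rewrite H (Dg_nS h)].
Qed.

Lemma TT_covers (x y : P) : TT x y -> covers x y.
Proof. by case/orP => /Dg_covers. Qed.

Lemma TT_closed_main (x y : P) : ~~ Dg (@TT P) x y.
Proof.
apply/negP => /and3P [cxy nT /existsP [a /existsP [d /and5P [cay nax cxd ndy H]]]].
move: nT; rewrite negb_or => /andP [n1 n2].
have lad := nD1 n1 cxy cay nax cxd ndy.
have nadj_a : forall a', covers a' y -> a' != x -> ~~ D1 a' y.
  move=> a' c1 c2; apply/negP => h; move/negP: n2; apply.
  by apply: (DgI (a:=a') (d:=d)) => //; rewrite h.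
have nadj_d : forall d', covers x d' -> d' != y -> ~~ D1 x d'.
  move=> d' c1 c2; apply/negP => h; move/negP: n2; apply.
  by apply: (DgI (a:=a) (d:=d')) => //; rewrite h orbT.
move: H; rewrite lad orbF => /orP [] hT.
- rewrite /TT (negbTE (nadj_a a cay nax)) /= in hT.
  case/and3P: hT => _ n1a /existsP [a' /existsP [d' /and5P [ca'y na'a cad' nd'y H']]].
  have la'd' := nD1 n1a cay ca'y na'a cad' nd'y.
  have nD1a' : ~~ D1 a' y.
    case: (eqVneq a' x) => [->//|ne]; exact: nadj_a.
  rewrite la'd' (negbTE nD1a') /= orbF in H'.
  have nxa : x != a by rewrite eq_sym.
  have lxd' := nD1 n1a cay cxy nxa cad' nd'y.
  have nxd' : x != d'.
    apply/eqP => e; subst d'.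
    exact: (covers_nbetween cay (covers_plt cad') (covers_plt cxy)).
  have [d1 [cxd1 ld1d']] := chain_up HP (pltI nxd' lxd').
  have nd1y : d1 != y.
    apply/eqP => e; subst d1.
    have nyd' : y != d' by rewrite eq_sym.
    exact: (covers_nbetween cad' (covers_plt cay) (pltI nyd' ld1d')).
  have lad1 := nD1 n1 cxy cay nax cxd1 nd1y.
  have nad1 : d1 != a.
    apply/eqP => e; subst d1.
    exact: (covers_nbetween cxy (covers_plt cxd1) (covers_plt cay)).
  have ed : d1 = d'.
    by case: (covers_between cad' lad1 ld1d') => // e; rewrite e eqxx in nad1.
  subst d1.
  case/and3P: H' => _ _ /existsP [a'' /existsP [d'' /and5P [ca''d' na''a cad'' nd''d' H'']]].
  rewrite /= in H''.
  have nyd' : y != d' by rewrite eq_sym.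
  move/negP: (nadj_d d' cxd1 nd'y); apply.
  case: (eqVneq d'' y) => [e|nd''y].
    subst d''.
    have na''x : a'' != x by apply/eqP => e; subst a''; rewrite (covers_le cxy) in H''.
    by apply: (DgI (a:=a'') (d:=y)) => //=; rewrite H''.
  have lxd'' := nD1 n1a cay cxy nxa cad'' nd''y.
  have na''x : a'' != x by apply/eqP => e; subst a''; rewrite lxd'' in H''.
  apply: (DgI (a:=a'') (d:=y)) => //.
  apply/orP; right; apply/orP; right; apply/negP => la''y.
  have na''y : a'' != y.
    apply/eqP => e; subst a''.
    exact: (covers_nbetween cad' (covers_plt cay) (covers_plt ca''d')).
  have [c [la''c ccy]] := chain_down HP (pltI na''y la''y).
  case: (eqVneq c a) => [e|nca].
    subst c.
    exact: (covers_nbetween ca''d' (pltI na''a la''c) (covers_plt cad')).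
  have lcd'' := nD1 n1a cay ccy nca cad'' nd''y.
  by move: H''; rewrite (le_trans HP la''c lcd'').
- rewrite /TT (negbTE (nadj_d d cxd ndy)) /= in hT.
  case/and3P: hT => _ n1d /existsP [a' /existsP [d' /and5P [ca'd na'x cxd' nd'd H']]].
  have la'd' := nD1 n1d cxd ca'd na'x cxd' nd'd.
  have nD1d' : ~~ D1 x d'.
    case: (eqVneq d' y) => [->//|ne]; exact: nadj_d.
  rewrite la'd' (negbTE nD1d') /= orbF in H'.
  have nyd : y != d by rewrite eq_sym.
  have la'y := nD1 n1d cxd ca'd na'x cxy nyd.
  have na'y : a' != y.
    apply/eqP => e; subst a'.
    exact: (covers_nbetween cxd (covers_plt cxy) (covers_plt ca'd)).
  have [c [la'c ccy]] := chain_down HP (pltI na'y la'y).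
  have ncx : c != x.
    apply/eqP => e; subst c.
    exact: (covers_nbetween ca'd (pltI na'x la'c) (covers_plt cxd)).
  have lcd := nD1 n1 cxy ccy ncx cxd ndy.
  have ncd : c != d.
    apply/eqP => e; subst c.
    exact: (covers_nbetween cxy (covers_plt cxd) (covers_plt ccy)).
  have ec : c = a'.
    by case: (covers_between ca'd la'c lcd) => // e; rewrite e eqxx in ncd.
  subst c.
  case/and3P: H' => _ _ /existsP [a'' /existsP [d'' /and5P [ca''d na''a' ca'd'' nd''d H'']]].
  rewrite /= in H''.
  have nxa' : x != a' by rewrite eq_sym.
  move/negP: (nadj_a a' ccy na'x); apply.
  case: (eqVneq a'' x) => [e|na''x].
    subst a''.
    have nd''y : d'' != y by apply/eqP => e; subst d''; rewrite (covers_le cxy) in H''.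
    by apply: (DgI (a:=x) (d:=d'')) => //=; rewrite H''.
  have la''y := nD1 n1d cxd ca''d na''x cxy nyd.
  have nd''y : d'' != y by apply/eqP => e; subst d''; rewrite la''y in H''.
  apply: (DgI (a:=x) (d:=d'')) => //.
  apply/orP; right; apply/orP; right; apply/negP => lxd''.
  have nxd'' : x != d''.
    apply/eqP => e; subst d''.
    exact: (covers_nbetween ccy (covers_plt ca'd'') (covers_plt cxy)).
  have [c [cxc lcd'']] := chain_up HP (pltI nxd'' lxd'').
  case: (eqVneq c d) => [e|ncd2].
    subst c.
    have ndd'' : d != d'' by rewrite eq_sym.
    exact: (covers_nbetween ca'd'' (covers_plt ca'd) (pltI ndd'' lcd'')).
  case: (eqVneq c y) => [e|ncy].
    subst c.
    have nyd'' : y != d'' by rewrite eq_sym.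
    exact: (covers_nbetween ca'd'' (covers_plt ccy) (pltI nyd'' lcd'')).
  have la''c := nD1 n1d cxd ca''d na''x cxc ncd2.
  by move: H''; rewrite (le_trans HP la''c lcd'').
Qed.

Lemma TT_min (S : P -> P -> bool) : (forall x y, ~~ Dg S x y) -> forall x y, TT x y -> S x y.
Proof.
move=> H.
have h1 : forall x y, D1 x y -> S x y.
  move=> x y h; apply/negPn/negP => ns; move/negP: (H x y); apply.
  exact: (Dg_mono (S:=fun _ _ => false)).
move=> x y /orP [/h1 //|h]; apply/negPn/negP => ns; move/negP: (H x y); apply.
exact: (Dg_mono (S:=@D1 P)).
Qed.

Lemma TT_closed (S : P -> P -> bool) x y : (forall a b, S a b -> TT a b) -> Dg S x y -> TT x y.
Proof.
move=> H h; apply/negPn/negP => nt; move/negP: (TT_closed_main x y); apply.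
exact: (Dg_mono (S:=S)).
Qed.
End Comb.

Section Sd.
Variable P : fposet.
Hypothesis HP : is_poset P.
Variable k : P -> P -> nat.
Local Notation le := (ple P).
Local Notation Q := (subdiv k).
Local Notation leQ := (ple (subdiv k)).

Definition emb (a : P) : Q := exist _ (inl a) isT.

Definition mk (r : sd_raw k) (h : sd_ok r) : Q := exist _ r h.

Lemma kmax_ge (x y : P) : k x y <= kmax k.
Proof. exact: (leq_bigmax (F := fun p : P * P => k p.1 p.2) (x, y)). Qed.

Lemma inr_eq (a b : P * P * 'I_(kmax k).+1) : (inr a == inr b :> sd_raw k) = (a == b).
Proof. by []. Qed.
Lemma inl_eq (a b : P) : (inl a == inl b :> sd_raw k) = (a == b).
Proof. by []. Qed.

Lemma inordk_val (x y : P) n : n < k x y -> (inord n : 'I_(kmax k).+1) = n :> nat.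
Proof. move=> h; apply: inordK; exact: leq_trans h (leq_trans (kmax_ge x y) (leqnSn _)). Qed.

Lemma dummy_up (u : Q) x y i : val u = inr (x, y, i) ->
  exists m : Q, plt u m /\ forall z : Q, plt u z -> leQ m z.
Proof.
case: u => ru hu /= E; subst ru; case/andP: (hu) => cxy hi.
case: (ltnP i.+1 (k x y)) => hi1.
  have ok : sd_ok (inr (x, y, inord i.+1) : sd_raw k) by rewrite /= cxy (inordk_val hi1).
  exists (mk ok); split.
    rewrite /plt -val_eqE /= inr_eq !xpair_eqE !eqxx /= -val_eqE /= (inordk_val hi1).
    by rewrite neq_ltn ltnSn leqnSn.
  case=> rz hz; case: rz hz => [c|[[x' y'] i']] hz; rewrite /plt -val_eqE /=.
    by [].
  rewrite inr_eq !xpair_eqE => /andP [ne /orP [/andP [/andP [/eqP ex /eqP ey] li]|->]]; last by rewrite orbT.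
  subst x' y'; rewrite !eqxx /= in ne *; rewrite (inordk_val hi1); apply/orP; left.
  by rewrite ltn_neqAle li andbT.
exists (emb y); split.
  by rewrite /plt -val_eqE /= (le_refl HP).
case=> rz hz; case: rz hz => [c|[[x' y'] i']] hz; rewrite /plt -val_eqE /=.
  by [].
rewrite inr_eq !xpair_eqE => /andP [ne /orP [/andP [/andP [/eqP ex /eqP ey] li]|->//]].
subst x' y'; exfalso; case/andP: hz => _ hi'; rewrite !eqxx /= in ne.
have : i < i' by rewrite ltn_neqAle li andbT.
move=> lt; move: (leq_ltn_trans (leq_trans hi1 lt) hi'); by rewrite ltnn.
Qed.

Lemma dummy_down (u : Q) x y i : val u = inr (x, y, i) ->
  exists m : Q, plt m u /\ forall z : Q, plt z u -> leQ z m.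
Proof.
case: u => ru hu /= E; subst ru; case/andP: (hu) => cxy hi.
case: (posnP i) => hi0.
  exists (emb x); split.
    by rewrite /plt -val_eqE /= (le_refl HP).
  case=> rz hz; case: rz hz => [c|[[x' y'] i']] hz; rewrite /plt -val_eqE /=.
    by [].
  rewrite inr_eq !xpair_eqE => /andP [ne /orP [/andP [/andP [/eqP ex /eqP ey] li]|->//]].
  subst x' y'; exfalso; rewrite !eqxx /= in ne.
  by move: li; rewrite hi0 leqn0 => /eqP e; move: ne; rewrite -val_eqE /= hi0 e.
have hi1 : i.-1 < k x y by rewrite (leq_trans _ hi) // ltnS leq_pred.
have ok : sd_ok (inr (x, y, inord i.-1) : sd_raw k) by rewrite /= cxy (inordk_val hi1).
exists (mk ok); split.
  rewrite /plt -val_eqE /= inr_eq !xpair_eqE !eqxx /= -val_eqE /= (inordk_val hi1).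
  by rewrite leq_pred andbT neq_ltn -[X in _ < X](prednK hi0) ltnSn.
case=> rz hz; case: rz hz => [c|[[x' y'] i']] hz; rewrite /plt -val_eqE /=.
  by [].
rewrite inr_eq !xpair_eqE => /andP [ne /orP [/andP [/andP [/eqP ex /eqP ey] li]|->]]; last by rewrite orbT.
subst x' y'; rewrite !eqxx /= in ne *; rewrite (inordk_val hi1); apply/orP; left.
have lt : i' < i by rewrite ltn_neqAle ne li.
by rewrite -ltnS prednK.
Qed.

Lemma dummy_up_uniq (u c d : Q) x y i : val u = inr (x, y, i) -> covers u c -> covers u d -> c = d.
Proof.
move=> E; have [m [um H]] := dummy_up E.
have key : forall w, covers u w -> w = m.
  move=> w cw; case: (eqVneq w m) => // ne; exfalso.
  apply: (covers_nbetween cw um); apply: pltI; first by rewrite eq_sym.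
  exact: H (covers_plt cw).
by move=> /key -> /key ->.
Qed.

Lemma dummy_down_uniq (u c d : Q) x y i : val u = inr (x, y, i) -> covers c u -> covers d u -> c = d.
Proof.
move=> E; have [m [mu H]] := dummy_down E.
have key : forall w, covers w u -> w = m.
  move=> w cw; case: (eqVneq w m) => // ne; exfalso.
  apply: (covers_nbetween cw _ mu); apply: pltI => //.
  exact: H (covers_plt cw).
by move=> /key -> /key ->.
Qed.

Lemma emb_val (z : Q) c : val z = inl c -> z = emb c.
Proof. by move=> e; apply: val_inj. Qed.

Lemma plt_emb (x y : P) : plt (emb x) (emb y) = plt x y.
Proof. by rewrite /plt -val_eqE /= inl_eq. Qed.

Lemma covers_emb (x y : P) : covers (emb x) (emb y) = covers x y && (k x y == 0).
Proof.
apply/idP/idP.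
  move=> c; have pxy : plt x y by rewrite -plt_emb (covers_plt c).
  apply/andP; split.
    apply: coversI => // z h1 h2.
    by apply: (covers_nbetween c (z:=emb z)); rewrite plt_emb.
  rewrite eqn0Ngt; apply/negP => hk.
  have cxy : covers x y.
    apply: coversI => // z h1 h2.
    by apply: (covers_nbetween c (z:=emb z)); rewrite plt_emb.
  have ok : sd_ok (inr (x, y, inord 0) : sd_raw k) by rewrite /= cxy (inordk_val hk).
  by apply: (covers_nbetween c (z := mk ok)); rewrite /plt -val_eqE /= (le_refl HP).
case/andP => cxy /eqP k0; apply: coversI; first by rewrite plt_emb (covers_plt cxy).
move=> z; have hz := valP z; case E: (val z) hz => [c|[[x' y'] i']] hz.
  by rewrite (emb_val E) !plt_emb; exact: covers_nbetween cxy.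
rewrite /plt -!val_eqE /= E /= => lxx' ly'y.
case/andP: hz => cx'y' hi'.
have lxy' : le x y' := le_trans HP lxx' (covers_le cx'y').
case: (covers_between cxy lxy' ly'y) => ey'.
  subst y'; move: (covers_plt cx'y') => /(plt_nle HP); by rewrite lxx'.
subst y'.
have lx'y : le x' y := covers_le cx'y'.
case: (covers_between cxy lxx' lx'y) => ex'.
  by subst x'; rewrite k0 in hi'.
by subst x'; move: (covers_neq cx'y'); rewrite eqxx.
Qed.

Lemma covers_to_emb (w : Q) y : covers w (emb y) ->
  (exists a, val w = inl a /\ covers a y) \/
  (exists a i, val w = inr (a, y, i) /\ covers a y /\ i < k a y).
Proof.
move=> c; have hw := valP w; case E: (val w) hw => [a|[[a y'] i]] hw.
  left; exists a; split => //; rewrite (emb_val E) in c.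
  apply: coversI; first by rewrite -plt_emb (covers_plt c).
  by move=> z h1 h2; apply: (covers_nbetween c (z:=emb z)); rewrite plt_emb.
right; exists a, i; case/andP: hw => cay' hi.
suff ey : y' = y by subst y'.
have := covers_plt c; rewrite /plt -val_eqE /= E /= => ly'y.
case: (eqVneq y' y) => // ne; exfalso.
apply: (covers_nbetween c (z:=emb y')); last by rewrite plt_emb pltI.
by rewrite /plt -val_eqE /= E /= (le_refl HP).
Qed.

Lemma covers_from_emb (w : Q) x : covers (emb x) w ->
  (exists d, val w = inl d /\ covers x d) \/
  (exists d i, val w = inr (x, d, i) /\ covers x d /\ i < k x d).
Proof.
move=> c; have hw := valP w; case E: (val w) hw => [d|[[x' d] i]] hw.
  left; exists d; split => //; rewrite (emb_val E) in c.
  apply: coversI; first by rewrite -plt_emb (covers_plt c).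
  by move=> z h1 h2; apply: (covers_nbetween c (z:=emb z)); rewrite plt_emb.
right; exists d, i; case/andP: hw => cx'd hi.
suff ex : x' = x by subst x'.
have := covers_plt c; rewrite /plt -val_eqE /= E /= => lxx'.
case: (eqVneq x' x) => // ne; exfalso.
apply: (covers_nbetween c (z:=emb x')); first by rewrite plt_emb pltI // eq_sym.
by rewrite /plt -val_eqE /= E /= (le_refl HP).
Qed.

Lemma lower_cover_ex (a y : P) : covers a y -> exists w : Q, covers w (emb y) /\
  ((val w = inl a /\ k a y = 0) \/ (exists i, val w = inr (a, y, i))).
Proof.
move=> cay; case: (posnP (k a y)) => hk.
  by exists (emb a); split; [rewrite covers_emb cay hk | left].
have hi1 : (k a y).-1 < k a y by rewrite prednK.
have ok : sd_ok (inr (a, y, inord (k a y).-1) : sd_raw k) by rewrite /= cay (inordk_val hi1).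
exists (mk ok); split; last by right; eexists.
apply: coversI; first by rewrite /plt -val_eqE /= (le_refl HP).
move=> z; have hz := valP z; case E: (val z) hz => [c|[[x' y'] i']] hz.
  rewrite (emb_val E) plt_emb /plt -val_eqE /= => lyc /andP [ne lcy].
  by move: ne; rewrite (le_anti HP lcy lyc) eqxx.
rewrite /plt -!val_eqE /= E /= inr_eq !xpair_eqE => /andP [ne /orP [/andP [/andP [/eqP ex /eqP ey] li]|lyx']] ly'y.
  subst x' y'; move: ne; rewrite !eqxx /= -val_eqE /= (inordk_val hi1).
  case/andP: hz => _ hi'.
  rewrite (inordk_val hi1) in li.
  move=> /negP; apply; rewrite eqn_leq li /= -ltnS prednK //.
case/andP: hz => cx'y' _.
move: (covers_plt cx'y') => /(plt_nle HP); by rewrite (le_trans HP ly'y lyx').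
Qed.

Lemma upper_cover_ex (x d : P) : covers x d -> exists w : Q, covers (emb x) w /\
  ((val w = inl d /\ k x d = 0) \/ (exists i, val w = inr (x, d, i))).
Proof.
move=> cxd; case: (posnP (k x d)) => hk.
  by exists (emb d); split; [rewrite covers_emb cxd hk | left].
have ok : sd_ok (inr (x, d, inord 0) : sd_raw k) by rewrite /= cxd (inordk_val hk).
exists (mk ok); split; last by right; eexists.
apply: coversI; first by rewrite /plt -val_eqE /= (le_refl HP).
move=> z; have hz := valP z; case E: (val z) hz => [c|[[x' y'] i']] hz.
  rewrite (emb_val E) plt_emb /plt -val_eqE /= => /andP [ne lxc] lcx.
  by move: ne; rewrite (le_anti HP lcx lxc) eqxx.
rewrite /plt -!val_eqE /= E /= inr_eq !xpair_eqE => lxx' /andP [ne /orP [/andP [/andP [/eqP ex /eqP ey] li]|ly'x]].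
  subst x' y'; move: ne; rewrite !eqxx /= -val_eqE /= (inordk_val hk).
  rewrite (inordk_val hk) in li.
  by rewrite eqn_leq li.
case/andP: hz => cx'y' _.
move: (covers_plt cx'y') => /(plt_nle HP); by rewrite (le_trans HP ly'x lxx').
Qed.

Lemma Ndiag_inv (u v : Q) : Ndiag u v -> exists x y, u = emb x /\ v = emb y.
Proof.
case/existsP => a /existsP [d /and4P [cuv cav cud /andP [nad nda]]].
have hu : exists x, val u = inl x.
  case E: (val u) => [x|[[x y] i]]; first by exists x.
  have e := dummy_up_uniq E cuv cud; subst d.
  by rewrite (covers_le cav) in nad.
have hv : exists y, val v = inl y.
  case E: (val v) => [y|[[x y] i]]; first by exists y.
  have e := dummy_down_uniq E cuv cav; subst a.
  by rewrite (covers_le cud) in nad.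
case: hu => x Ex; case: hv => y Ey.
by exists x, y; rewrite (emb_val Ex) (emb_val Ey).
Qed.

Lemma Ndiag_emb (x y : P) : Ndiag (emb x) (emb y) = Dg (fun a b => 0 < k a b) x y.
Proof.
apply/idP/idP.
  case/existsP => a /existsP [d /and4P [cxy cay cxd /andP [nad nda]]].
  move: cxy; rewrite covers_emb => /andP [cxy /eqP k0].
  have nk : ~~ (0 < k x y) by rewrite k0.
  case: (covers_to_emb cay) => [[a0 [Ea ca0y]]|[a0 [i [Ea [ca0y hi]]]]];
  case: (covers_from_emb cxd) => [[d0 [Ed cxd0]]|[d0 [j [Ed [cxd0 hj]]]]].
  - apply: (DgI (a:=a0) (d:=d0)) => //.
    + apply/eqP => e; subst a0; rewrite (emb_val Ea) in nad; by rewrite (covers_le cxd) in nad.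
    + apply/eqP => e; subst d0; rewrite (emb_val Ed) in nad; by rewrite (covers_le cay) in nad.
    + by move: nad; rewrite (emb_val Ea) (emb_val Ed) /= => ->; rewrite !orbT.
  - apply: (DgI (a:=a0) (d:=d0)) => //.
    + apply/eqP => e; subst a0; rewrite (emb_val Ea) in nad; by rewrite (covers_le cxd) in nad.
    + by apply/eqP => e; subst d0; rewrite k0 in hj.
    + by rewrite (leq_ltn_trans (leq0n _) hj) orbT.
  - apply: (DgI (a:=a0) (d:=d0)) => //.
    + by apply/eqP => e; subst a0; rewrite k0 in hi.
    + apply/eqP => e; subst d0; rewrite (emb_val Ed) in nad; by rewrite (covers_le cay) in nad.
    + by rewrite (leq_ltn_trans (leq0n _) hi).
  - apply: (DgI (a:=a0) (d:=d0)) => //.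
    + by apply/eqP => e; subst a0; rewrite k0 in hi.
    + by apply/eqP => e; subst d0; rewrite k0 in hj.
    + by rewrite (leq_ltn_trans (leq0n _) hi).
case/and3P => cxy nk /existsP [a0 /existsP [d0 /and5P [ca0y na0x cxd0 nd0y H]]].
have k0 : k x y = 0 by move: nk; rewrite lt0n negbK => /eqP.
have [wa [cwa Ha]] := lower_cover_ex ca0y.
have [wd [cwd Hd]] := upper_cover_ex cxd0.
apply/existsP; exists wa; apply/existsP; exists wd.
rewrite /isN covers_emb cxy k0 eqxx cwa cwd /=.
have n1 : ~~ le d0 a0.
  apply/negP => l; apply: (covers_nbetween cxy (covers_plt cxd0)).
  apply: (le_plt_trans HP l). exact: (covers_plt ca0y).
have n2 : ~~ le y d0.
  apply/negP => l; case: (covers_between cxd0 (covers_le cxy) l) => e.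
    by move: (covers_neq cxy); rewrite e eqxx.
  by rewrite e eqxx in nd0y.
have n3 : ~~ le a0 x.
  apply/negP => l; case: (covers_between ca0y l (covers_le cxy)) => e.
    by rewrite e eqxx in na0x.
  by move: (covers_neq cxy); rewrite e eqxx.
have n4 : ~~ le y x by apply: (plt_nle HP); exact: covers_plt cxy.
rewrite /incomp /=.
case: Ha => [[Ea ka]|[i Ea]]; case: Hd => [[Ed kd]|[j Ed]]; rewrite Ea Ed /=.
- by rewrite n1 andbT; move: H; rewrite ka kd.
- by rewrite n3 n1.
- by rewrite n2 n1.
- rewrite !xpair_eqE (negbTE na0x) /= (negbTE n4) eq_sym (negbTE na0x) /=. exact: n1.
Qed.

Lemma Nfree_sdP : Nfree Q <-> forall x y, ~~ Dg (fun a b => 0 < k a b) x y.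
Proof.
split.
  move=> H x y; apply/negP; rewrite -Ndiag_emb => /existsP [a /existsP [d h]].
  by move/forallP: H => /(_ a) /forallP /(_ (emb x)) /forallP /(_ (emb y)) /forallP /(_ d); rewrite h.
move=> H; apply/forallP => a; apply/forallP => b; apply/forallP => c; apply/forallP => d.
apply/negP => h.
have nd : Ndiag b c by apply/existsP; exists a; apply/existsP; exists d.
have [x [y [eb ec]]] := Ndiag_inv nd; subst b c.
by move: nd; rewrite Ndiag_emb (negbTE (H x y)).
Qed.
End Sd.

Lemma iso_refl (Q : fposet) : iso Q Q.
Proof. exists id; split => //; exact: (Bijective (g:=id)). Qed.

Lemma iso_sym (Q R : fposet) : iso Q R -> iso R Q.
Proof.
case=> f [[g fg gf] H]; exists g; split; first exact: (Bijective gf fg).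
by move=> x y; rewrite -H !gf.
Qed.

Lemma iso_trans (Q R U : fposet) : iso Q R -> iso R U -> iso Q U.
Proof.
case=> f [fb H] [h [hb H']]; exists (h \o f); split; first exact: bij_comp.
by move=> x y; rewrite /= H' H.
Qed.

Section Transport.
Variables Q R : fposet.
Variable f : Q -> R.
Hypothesis fb : bijective f.
Hypothesis fle : forall x y, ple R (f x) (f y) = ple Q x y.

Let finj : injective f := bij_inj fb.

Lemma plt_f x y : plt (f x) (f y) = plt x y.
Proof. by rewrite /plt fle (inj_eq finj). Qed.

Lemma forall_f (p : R -> bool) : [forall z, p z] = [forall z, p (f z)].
Proof.
case: fb => g fg gf; apply/forallP/forallP => H z //.
by rewrite -(gf z).
Qed.
Lemma exists_f (p : R -> bool) : [exists z, p z] = [exists z, p (f z)].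
Proof.
case: fb => g fg gf; apply/existsP/existsP => [[z h]|[z h]]; last by exists (f z).
by exists (g z); rewrite gf.
Qed.

Lemma covers_f x y : covers (f x) (f y) = covers x y.
Proof.
rewrite /covers plt_f forall_f; congr (_ && _); apply: eq_forallb => z.
by rewrite !plt_f.
Qed.

Lemma incomp_f x y : incomp (f x) (f y) = incomp x y.
Proof. by rewrite /incomp !fle. Qed.

Lemma isN_f a b c d : isN (f a) (f b) (f c) (f d) = isN a b c d.
Proof. by rewrite /isN !covers_f incomp_f. Qed.

Lemma Ndiag_f b c : Ndiag (f b) (f c) = Ndiag b c.
Proof.
rewrite /Ndiag exists_f; apply: eq_existsb => a; rewrite exists_f; apply: eq_existsb => d.
by rewrite isN_f.
Qed.

Lemma Nfree_f : Nfree R = Nfree Q.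
Proof.
rewrite /Nfree forall_f; apply: eq_forallb => a; rewrite forall_f; apply: eq_forallb => b.
rewrite forall_f; apply: eq_forallb => c; rewrite forall_f; apply: eq_forallb => d.
by rewrite isN_f.
Qed.

Variable k : Q -> Q -> nat.
Variable k' : R -> R -> nat.
Hypothesis hk : forall a b, k' (f a) (f b) = k a b.

Lemma kmax_f x y : k x y <= kmax k'.
Proof. rewrite -hk; exact: kmax_ge. Qed.

Definition Fr (r : sd_raw k) : sd_raw k' :=
  match r with inl a => inl (f a) | inr (x, y, i) => inr (f x, f y, inord i) end.

Lemma Fr_ok r : sd_ok r -> sd_ok (Fr r).
Proof.
case: r => [a|[[x y] i]] //= /andP [cxy hi].
by rewrite covers_f cxy hk inordK // (leq_trans hi (leq_trans (kmax_f x y) (leqnSn _))).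
Qed.

Definition Fsd (u : subdiv k) : subdiv k' := exist _ (Fr (val u)) (Fr_ok (valP u)).

Lemma Fsd_le u v : ple (subdiv k') (Fsd u) (Fsd v) = ple (subdiv k) u v.
Proof.
case: u v => [[a|[[x y] i]] hu] [[b|[[x' y'] j]] hv] //=; rewrite ?fle //.
case/andP: hu => _ hi; case/andP: hv => _ hj.
rewrite !xpair_eqE !(inj_eq finj) !inordK //.
  exact: (leq_trans hj (leq_trans (kmax_f x' y') (leqnSn _))).
exact: (leq_trans hi (leq_trans (kmax_f x y) (leqnSn _))).
Qed.

Lemma Fsd_bij : bijective Fsd.
Proof.
have [g fg gf] := fb.
have hk2 : forall a b, k (g a) (g b) = k' a b by move=> a b; rewrite -hk !gf.
have ok : forall r : sd_raw k', sd_ok r ->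
    sd_ok (match r with inl a => inl (g a) | inr (x, y, i) => inr (g x, g y, inord i) end : sd_raw k).
  case => [a|[[x y] i]] //= /andP [cxy hi].
  have c' : covers (g x) (g y) by rewrite -covers_f !gf.
  have hi' : i < (kmax k).+1.
    apply: (leq_trans hi); rewrite -hk2; exact: (leq_trans (kmax_ge k (g x) (g y)) (leqnSn _)).
  by rewrite c' hk2 inordK.
exists (fun u : subdiv k' => (mk (ok _ (valP u)) : subdiv k)).
  case=> [[a|[[x y] i]] hu]; apply: val_inj => //=; rewrite ?fg //.
  case/andP: hu => _ hi; congr (inr (_, _, _)); rewrite ?fg //.
  have h1 : i < (kmax k').+1 := leq_trans hi (leq_trans (kmax_f x y) (leqnSn _)).
  by apply: val_inj; rewrite /= (inordK h1) inordK.
case=> [[a|[[x y] i]] hu]; apply: val_inj => //=; rewrite ?gf //.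
case/andP: hu => _ hi; congr (inr (_, _, _)); rewrite ?gf //.
have h1 : i < (kmax k).+1.
  apply: (leq_trans hi); rewrite -hk2; exact: (leq_trans (kmax_ge k (g x) (g y)) (leqnSn _)).
by apply: val_inj; rewrite /= (inordK h1) inordK.
Qed.

Lemma iso_subdiv_f : iso (subdiv k) (subdiv k').
Proof. exists Fsd; split; [exact: Fsd_bij | exact: Fsd_le]. Qed.
End Transport.

Lemma iso_subdiv_ext (Q : fposet) (k k' : Q -> Q -> nat) :
  (forall a b, k' a b = k a b) -> iso (subdiv k) (subdiv k').
Proof. move=> h; apply: (iso_subdiv_f (f:=id)) => //; exact: (Bijective (g:=id)). Qed.

Lemma emb_bij0 (P : fposet) (k : P -> P -> nat) : (forall a b, k a b = 0) -> bijective (@emb P k).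
Proof.
move=> h0.
exists (fun u : subdiv k => match val u with inl a => a | inr (x, _, _) => x end) => //.
case=> [[a|[[x y] i]] hu]; apply: val_inj => //=.
by move: hu => /= /andP [_]; rewrite h0.
Qed.

Lemma iso_subdiv0 (P : fposet) (k : P -> P -> nat) : (forall a b, k a b = 0) -> iso P (subdiv k).
Proof. move=> h0; exists (@emb P k); split; [exact: emb_bij0 | by []]. Qed.

Section SdSd.
Variable P : fposet.
Hypothesis HP : is_poset P.
Variable k : P -> P -> nat.
Local Notation Q := (subdiv k).
Variable j : Q -> Q -> nat.
Hypothesis hj : forall u v, 0 < j u v -> covers u v /\ exists x y, u = emb k x /\ v = emb k y.

Definition k2 (x y : P) := k x y + j (emb k x) (emb k y).

Definition pr (u : Q) : P := match val u with inl a => a | inr (x, _, _) => x end.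

Lemma emb_eq (x y : P) : (emb k x == emb k y) = (x == y).
Proof. by rewrite -val_eqE. Qed.

Lemma inr_form (u v : Q) (i : 'I_(kmax j).+1) : sd_ok (inr (u, v, i) : sd_raw j) ->
  exists x y, [/\ u = emb k x, v = emb k y, covers x y, k x y = 0 & i < j (emb k x) (emb k y)].
Proof.
case/andP => cuv hi.
have [_ [x [y [eu ev]]]] := hj (leq_ltn_trans (leq0n _) hi); subst u v.
move: cuv; rewrite covers_emb // => /andP [cxy /eqP k0].
by exists x, y; split.
Qed.

Lemma k2_le (x y : P) : k2 x y <= kmax k2.
Proof. exact: kmax_ge. Qed.

Definition Fr2 (r : sd_raw j) : sd_raw k2 :=
  match r with
  | inl q => match val q with inl a => inl a | inr (x, y, i) => inr (x, y, inord i) end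
  | inr (u, v, i) => inr (pr u, pr v, inord i)
  end.

Lemma Fr2_ok r : sd_ok r -> sd_ok (Fr2 r).
Proof.
case: r => [q|[[u v] i]] /=.
  move=> _; case: q => [[a|[[x y] i]] hq] //=; case/andP: hq => cxy hi.
  have h : i < (kmax k2).+1.
    apply: (leq_trans hi); apply: (leq_trans _ (leqnSn _)); apply: leq_trans (k2_le x y).
    exact: leq_addr.
  by rewrite cxy inordK // (leq_trans hi (leq_addr _ _)).
move=> h; have [x [y [eu ev cxy k0 hi]]] := inr_form h; subst u v.
have h' : i < (kmax k2).+1.
  apply: (leq_trans hi); apply: (leq_trans _ (leqnSn _)); apply: leq_trans (k2_le x y).
  by rewrite /k2 k0.
by rewrite /= cxy inordK // /k2 k0.
Qed.

Definition F2 (u : subdiv j) : subdiv k2 := exist _ (Fr2 (val u)) (Fr2_ok (valP u)).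

Lemma F2_le u v : ple (subdiv k2) (F2 u) (F2 v) = ple (subdiv j) u v.
Proof.
case: u v => [[q|[[u1 v1] i]] hu] [[q'|[[u2 v2] i']] hv].
- move: hu hv; case: q => [[a|[[x y] i]] hq]; case: q' => [[b|[[x' y'] i']] hq'] _ _ //=.
  case/andP: hq => _ hi; case/andP: hq' => _ hi'.
  rewrite !inordK //; apply: (leq_trans _ (leqnSn _)).
    by apply: leq_trans (k2_le x' y'); apply: leq_trans hi' (leq_addr _ _).
  by apply: leq_trans (k2_le x y); apply: leq_trans hi (leq_addr _ _).
- have [x [y [eu ev cxy k0 hi]]] := inr_form hv; subst u2 v2.
  move: hu; case: q => [[a|[[x1 y1] i1]] hq] _ //=.
  case/andP: hq => _ hi1; rewrite !xpair_eqE.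
  case: (eqVneq x1 x) => [e1|//]; case: (eqVneq y1 y) => [e2|//]; subst x1 y1.
  by rewrite k0 in hi1.
- have [x [y [eu ev cxy k0 hi]]] := inr_form hu; subst u1 v1.
  move: hv; case: q' => [[a|[[x1 y1] i1]] hq] _ //=.
  case/andP: hq => _ hi1; rewrite !xpair_eqE.
  case: (eqVneq x x1) => [e1|//]; case: (eqVneq y y1) => [e2|//]; subst x1 y1.
  by rewrite k0 in hi1.
- have [x [y [eu ev cxy k0 hi]]] := inr_form hu; subst u1 v1.
  have [x' [y' [eu ev cxy' k0' hi']]] := inr_form hv; subst u2 v2.
  rewrite /= !xpair_eqE !emb_eq !inordK //; apply: (leq_trans _ (leqnSn _)).
    by apply: leq_trans (k2_le x' y'); rewrite /k2 k0'.
  by apply: leq_trans (k2_le x y); rewrite /k2 k0.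
Qed.

Lemma inord2 (A B : nat) (i : 'I_A.+1) : i < B.+1 -> (inord (inord i : 'I_B.+1) : 'I_A.+1) = i.
Proof. by move=> h; apply: val_inj; rewrite /= (inordK h) inordK. Qed.

Definition Gr2 (r : sd_raw k2) : sd_raw j :=
  match r with
  | inl a => inl (emb k a)
  | inr (x, y, i) => if i < k x y then inl (insubd (emb k x) (inr (x, y, inord i) : sd_raw k))
                     else inr (emb k x, emb k y, inord i)
  end.

Lemma Gr2_ok r : sd_ok r -> sd_ok (Gr2 r).
Proof.
case: r => [a|[[x y] i]] //= /andP [cxy hi]; case: ifP => hik //.
have jp : 0 < j (emb k x) (emb k y).
  rewrite lt0n; apply/eqP => e; move: hi; by rewrite /k2 e addn0 hik.
have [c _] := hj jp.
move: (c); rewrite covers_emb // => /andP [_ /eqP k0].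
have h : i < (kmax j).+1.
  apply: (leq_trans hi); apply: (leq_trans _ (leqnSn _)); rewrite /k2 k0 add0n.
  exact: kmax_ge.
by rewrite /= c inordK // -[j _ _]add0n -k0.
Qed.

Definition G2 (w : subdiv k2) : subdiv j := exist _ (Gr2 (val w)) (Gr2_ok (valP w)).

Lemma F2_bij : bijective F2.
Proof.
exists G2.
  case=> [[q|[[u1 v1] i]] hu]; apply: val_inj.
    move: hu; case: q => [[a|[[x y] i]] hq] _ /=; first by congr inl; apply: val_inj.
    case/andP: (hq) => cxy hi.
    have h1 : i < (kmax k2).+1.
      apply: (leq_trans hi); apply: (leq_trans _ (leqnSn _)); apply: leq_trans (k2_le x y).
      exact: leq_addr.
    by rewrite inordK // hi; congr inl; apply: val_inj; rewrite val_insubd /= inord_val cxy hi.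
  have [x [y [eu ev cxy k0 hi]]] := inr_form hu; subst u1 v1.
  have h1 : i < (kmax k2).+1.
    apply: (leq_trans hi); apply: (leq_trans _ (leqnSn _)); apply: leq_trans (k2_le x y).
    by rewrite /k2 k0.
  by rewrite /= inordK // k0 /= inord_val.
case=> [[a|[[x y] i]] hw]; apply: val_inj => //=.
case/andP: (hw) => cxy hi.
case: ifP => hik /=.
  have hb : i < (kmax k).+1 := leq_trans hik (leq_trans (kmax_ge k x y) (leqnSn _)).
  have ok : sd_ok (inr (x, y, inord i) : sd_raw k) by rewrite /= cxy (inordK hb) hik.
  have := val_insubd (emb k x) (inr (x, y, inord i) : sd_raw k); rewrite ok /= => ->.
  by rewrite inord2.
rewrite inord2 //.
have jp : 0 < j (emb k x) (emb k y).
  rewrite lt0n; apply/eqP => e; move: hi; by rewrite /k2 e addn0 hik.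
have [c _] := hj jp.
move: (c); rewrite covers_emb // => /andP [_ /eqP k0].
apply: (leq_trans hi); apply: (leq_trans _ (leqnSn _)); rewrite /k2 k0 add0n.
exact: kmax_ge.
Qed.

Lemma iso_sdsd : iso (subdiv j) (subdiv k2).
Proof. exists F2; split; [exact: F2_bij | exact: F2_le]. Qed.
End SdSd.

Section Main.
Variable P : fposet.
Hypothesis HP : is_poset P.

Definition kS (S : {set P * P}) (x y : P) : nat := nat_of_bool ((x, y) \in S).
Definition TTset : {set P * P} := [set e | TT e.1 e.2].

Lemma Dg_kS (S : {set P * P}) x y :
  Dg (fun a b => 0 < kS S a b) x y = Dg (fun a b => (a, b) \in S) x y.
Proof. by apply: Dg_ext => a b; rewrite /kS lt0b. Qed.

Lemma Nfree_state (R : fposet) S : iso R (subdiv (kS S)) ->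
  (Nfree R <-> forall x y, ~~ Dg (fun a b => (a, b) \in S) x y).
Proof.
case=> f [fb fle]; rewrite -(Nfree_f fb fle).
split; first by move/(Nfree_sdP HP) => H x y; rewrite -Dg_kS.
by move=> H; apply/(Nfree_sdP HP) => x y; rewrite Dg_kS.
Qed.

Lemma Ndiag_covers (Q : fposet) (u v : Q) : Ndiag u v -> covers u v.
Proof. by case/existsP => a /existsP [d /and4P []]. Qed.

Lemma step_state (R R' : fposet) S : iso R (subdiv (kS S)) -> step R R' ->
  exists x y, Dg (fun a b => (a, b) \in S) x y /\ iso R' (subdiv (kS ((x, y) |: S))).
Proof.
case=> f [fb fle] [b [c [nd hR']]].
have nd' : Ndiag (f b) (f c) by rewrite (Ndiag_f fb fle).
have [x [y [eb ec]]] := Ndiag_inv HP nd'.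
have dg : Dg (fun a b => 0 < kS S a b) x y by rewrite -Ndiag_emb // -eb -ec.
exists x, y; split; first by rewrite -Dg_kS.
apply: (iso_trans hR').
have finj := bij_inj fb.
pose j := fun u v : subdiv (kS S) => nat_of_bool ((u, v) == (f b, f c)).
apply: (iso_trans (iso_subdiv_f (k' := j) fb fle _)).
  by move=> a a'; rewrite /j !xpair_eqE !(inj_eq finj).
have hj : forall u v, 0 < j u v -> covers u v /\ exists x y, u = emb (kS S) x /\ v = emb (kS S) y.
  move=> u v; rewrite /j lt0b xpair_eqE => /andP [/eqP -> /eqP ->]; split.
    exact: Ndiag_covers nd'.
  by exists x, y.
apply: (iso_trans (iso_sdsd HP hj)).
apply: iso_subdiv_ext => a a'.
have nS : (x, y) \notin S by move: (Dg_nS dg); rewrite /kS lt0b.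
rewrite /k2 /j eb ec !xpair_eqE !emb_eq /kS in_setU1 xpair_eqE.
case: (eqVneq a x) => [ea|_] /=; last by rewrite addn0. case: (eqVneq a' y) => [ea'|_] /=; last by rewrite addn0. by subst a a'; rewrite (negbTE nS).

Qed.

Lemma run_state (s : seq fposet) : forall (R : fposet) S, iso R (subdiv (kS S)) ->
  S \subset TTset -> run R s ->
  exists S', [/\ iso (last R s) (subdiv (kS S')), S' \subset TTset & #|S'| = #|S| + size s].
Proof.
elim: s => [|Q s IH] R S hR hS /=.
  by move=> _; exists S; rewrite addn0.
case=> st rn.
have [x [y [dg hQ]]] := step_state hR st.
have nS : (x, y) \notin S by exact: (Dg_nS dg).
have hS' : (x, y) |: S \subset TTset.
  rewrite subUset hS andbT sub1set inE /=.
  apply: (TT_closed HP (S := fun a b => (a, b) \in S)) dg => a b h.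
  by move/subsetP: hS => /(_ _ h); rewrite inE.
have [S' [h1 h2 h3]] := IH Q _ hQ hS' rn.
by exists S'; split => //; rewrite h3 cardsU1 nS addnS.
Qed.

Lemma iso_init : iso P (subdiv (kS set0)).
Proof. by apply: iso_subdiv0 => a b; rewrite /kS in_set0. Qed.

Lemma final_state (S : {set P * P}) : S \subset TTset ->
  (forall x y, ~~ Dg (fun a b => (a, b) \in S) x y) -> S = TTset.
Proof.
move=> hS H; apply/eqP; rewrite eqEsubset hS /=.
apply/subsetP => [[x y]]; rewrite inE /= => t.
exact: (TT_min H t).
Qed.

Lemma Ndiag_D1 (x y : P) : Ndiag x y = D1 x y.
Proof.
have h0 : forall a b : P, (fun _ _ => 0) a b = 0 by [].
have fb := emb_bij0 h0.
rewrite -(Ndiag_f (f := emb (fun _ _ : P => 0)) fb) //.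
by rewrite Ndiag_emb //; apply: Dg_ext.
Qed.

Lemma SNSN_iso : iso (S_N (S_N P)) (subdiv (kS TTset)).
Proof.
pose k1 := fun b c : P => nat_of_bool (Ndiag b c).
have hj : forall u v : subdiv k1, 0 < nat_of_bool (Ndiag u v) ->
    covers u v /\ exists x y, u = emb k1 x /\ v = emb k1 y.
  move=> u v; rewrite lt0b => nd; split; first exact: Ndiag_covers nd.
  by case: (Ndiag_inv HP nd) => x [y [-> ->]]; exists x, y.
apply: (iso_trans (iso_sdsd HP hj)).
apply: iso_subdiv_ext => x y.
rewrite /k2 /kS /TTset inE /= /TT Ndiag_emb // /k1 Ndiag_D1.
have -> : Dg (fun a b => 0 < nat_of_bool (Ndiag a b)) x y = D2 x y.
  by rewrite /D2; apply: Dg_ext => a b; rewrite lt0b Ndiag_D1.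
case h1: (D1 x y) => /=; last by case: (D2 x y).
case h2: (D2 x y) => //; move: (Dg_nS h2); by rewrite h1.
Qed.

End Main.

Unset Implicit Arguments.
Theorem theorem2 (P : fposet) (HP : is_poset P) :
  (* the algorithm always stops: there is no infinite run *)
  (~ exists f : nat -> fposet, f 0 = P /\ forall m, step (f m) (f m.+1)) /\
  (* whatever the choices, it stops on S_N(S_N(P)) *)
  (forall s : seq fposet, run P s -> Nfree (last P s) -> iso (last P s) (S_N (S_N P))) /\
  (* the number of steps does not depend on the choices *)
  (forall s t : seq fposet, run P s -> Nfree (last P s) ->
     run P t -> Nfree (last P t) -> size s = size t) /\
  (* S_N(S_N(P)) is the smallest N-free barycentric subdivision of Diag(P) *)
  Nfree (S_N (S_N P)) /\
  (exists k0 : P -> P -> nat,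
     valid_subdiv k0 /\ iso (S_N (S_N P)) (subdiv k0) /\
     forall k : P -> P -> nat, valid_subdiv k -> Nfree (subdiv k) ->
       forall x y : P, k0 x y <= k x y).
Proof.
have fin : forall s, run P s -> Nfree (last P s) ->
    iso (last P s) (subdiv (kS (TTset P))) /\ #|TTset P| = size s.
  move=> s rs nf.
  have [S [h1 h2 h3]] := run_state HP (iso_init P) (sub0set _) rs.
  have eS := final_state h2 ((Nfree_state HP h1).1 nf); subst S.
  by rewrite h3 cards0.
split.
  case=> f [f0 fs].
  have H : forall m, exists S, [/\ iso (f m) (subdiv (kS S)), S \subset TTset P & #|S| = m].
    elim=> [|m [S [h1 h2 h3]]].
      by exists set0; rewrite f0 cards0; split => //; [exact: iso_init | exact: sub0set].
    have rn : run (f m) [:: f m.+1] by split.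
    have [S' [h1' h2' h3']] := run_state HP h1 h2 rn.
    by exists S'; rewrite h3' h3 addn1.
  have [S [_ h2 h3]] := H (#|TTset P|.+1).
  by move: (subset_leq_card h2); rewrite h3 ltnn.
split.
  move=> s rs nf; have [h1 _] := fin s rs nf.
  exact: iso_trans h1 (iso_sym (SNSN_iso HP)).
split.
  move=> s t rs nfs rt nft.
  by have [_ <-] := fin s rs nfs; have [_ <-] := fin t rt nft.
have nT : forall x y, ~~ Dg (fun a b => (a, b) \in TTset P) x y.
  move=> x y; rewrite (Dg_ext (S' := @TT P)); first exact: TT_closed_main.
  by move=> a b; rewrite inE.
split.
  by apply/(Nfree_state HP (SNSN_iso HP)).
exists (kS (TTset P)); split.
  by move=> x y; rewrite /kS lt0b inE => /TT_covers.
split; first exact: SNSN_iso.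
move=> k _ nf x y; have H := (Nfree_sdP HP k).1 nf.
rewrite /kS; case: (boolP ((x, y) \in TTset P)) => [t|nt] //.
move: t; rewrite inE /= => t.
exact: (TT_min H t).
Qed.
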